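(* Let $\Gamma$ be a graph with discriminant $P$ and let $x,y$ be vertices of $\Gamma$. If perfect state transfer occurs from $d^*e_x$ to $d^*e_y$ at time $\tau$, then $2\lambda$ is an algebraic integer for every $\lambda\in\Theta_P(e_x)$.
   Context: All graphs are finite and simple. For $\Gamma$ with symmetric arc set $\mathcal{A}$ ($t((x,y))=y$, $(x,y)^{-1}=(y,x)$): boundary matrix $d_{x,a}=\frac{1}{\sqrt{\deg x}}\delta_{x,t(a)}$, shift matrix $R_{a,b}=\delta_{a,b^{-1}}$, $U=R(2d^*d-I_{\mathcal{A}})$, discriminant $P=dRd^*$. Perfect state transfer from $\Phi$ to a distinct state $\Psi$ at time $\tau\in\mathbb{Z}_{\ge1}$ means $U^\tau\Phi=\gamma\Psi$ for some $|\gamma|=1$. For the spectral decomposition $P=\sum_\lambda\lambda E_\lambda$ (orthogonal eigenprojections), $\Theta_P(e_x)=\{\lambda\mid E_\lambda e_x\ne0\}$. *)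

(* Defs.v *)
From HB Require Import structures.
From mathcomp Require Import all_boot all_order all_algebra all_field.
From mathcomp Require Import algC algnum.
Set Implicit Arguments. Unset Strict Implicit. Unset Printing Implicit Defensive.
Import Order.TTheory GRing.Theory Num.Theory.
Local Open Scope ring_scope.

Definition simple_graph (V : finType) (e : rel V) : Prop :=
  symmetric e /\ irreflexive e.

Definition arc (V : finType) (e : rel V) : finType := {a : V * V | e a.1 a.2}.

Definition tail_arc (V : finType) (e : rel V) (a : arc e) : V := (val a).1.
Definition term_arc (V : finType) (e : rel V) (a : arc e) : V := (val a).2.

(* inverse arc (x,y)^{-1} = (y,x), needs symmetry *)
Definition arc_inv_pair (V : finType) (a : V * V) : V * V := (a.2, a.1).

Definition deg (V : finType) (e : rel V) (x : V) : nat := #|[set y | e x y]|.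

Definition adjmx (m n : nat) (A : 'M[algC]_(m, n)) : 'M[algC]_(n, m) :=
  map_mx (fun z : algC => z^*) A^T.

Definition bdry (V : finType) (e : rel V) : 'M[algC]_(#|V|, #|arc e|) :=
  \matrix_(i, j)
    (if enum_val i == term_arc (enum_val j : arc e)
     then (sqrtC ((deg e (enum_val i))%:R))^-1 else 0).

Definition shift (V : finType) (e : rel V) : 'M[algC]_(#|arc e|) :=
  \matrix_(i, j)
    ((val (enum_val i : arc e) == arc_inv_pair (val (enum_val j : arc e)))%:R).

Definition evol (V : finType) (e : rel V) : 'M[algC]_(#|arc e|) :=
  shift e *m (2%:R *: (adjmx (bdry e) *m bdry e) - 1%:M).

Definition discr (V : finType) (e : rel V) : 'M[algC]_(#|V|) :=
  bdry e *m shift e *m adjmx (bdry e).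

Definition evec (V : finType) (x : V) : 'cV[algC]_(#|V|) :=
  delta_mx (enum_rank x) 0.

Definition pst (n : nat) (U : 'M[algC]_n) (Phi Psi : 'cV[algC]_n) (tau : nat) : Prop :=
  Phi != Psi /\ (0 < tau)%N /\
  exists gamma : algC, `|gamma| = 1 /\ U ^+ tau *m Phi = gamma *: Psi.

Definition spectral_decomp (n : nat) (P : 'M[algC]_n) (s : seq algC)
  (E : algC -> 'M[algC]_n) : Prop :=
  [/\ uniq s,
      (forall lam, lam \in s ->
         [/\ E lam != 0, E lam *m E lam = E lam & adjmx (E lam) = E lam]),
      (forall lam mu, lam \in s -> mu \in s -> lam != mu -> E lam *m E mu = 0),
      \sum_(lam <- s) E lam = 1%:M
    & P = \sum_(lam <- s) lam *: E lam].

Definition eig_support (n : nat) (s : seq algC) (E : algC -> 'M[algC]_n)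
  (v : 'cV[algC]_n) : seq algC :=
  [seq lam <- s | E lam *m v != 0].

(* Main.v *)
Require Import Defs.
From HB Require Import structures.
From mathcomp Require Import all_boot all_order all_algebra all_field.
From mathcomp Require Import algC algnum.
From mathcomp Require Import ring.
Import Order.TTheory GRing.Theory Num.Theory.
Local Open Scope ring_scope.

Fixpoint cheb (t : nat) : {poly algC} * {poly algC} :=
  match t with
  | 0 => (1, 0)
  | t'.+1 => ((- (cheb t').2), (cheb t').1 + 'X * (cheb t').2)
  end.

Lemma cheb_int t : (cheb t).1 \is a polyOver Num.int /\ (cheb t).2 \is a polyOver Num.int.
Proof.
elim: t => [|t [h1 h2]] /=; first by split; [rewrite -polyC1 polyOverC; exact: rpred1 | exact: polyOver0].
split; apply/polyOverP => i.
  by rewrite coefN rpredN; exact: (polyOverP h2).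
rewrite coefD coefXM rpredD //; first exact: (polyOverP h1).
by case: eqP => _; [exact: rpred0 | exact: (polyOverP h2)].
Qed.

Lemma cheb_monic t :
  [/\ (cheb t.+1).2 \is monic, size (cheb t.+1).2 = t.+1 & (size (cheb t.+1).1 <= t)%N].
Proof.
elim: t => [|t [m s1 s2]].
  by rewrite /= mulr0 addr0 monic1 size_poly1 oppr0 size_poly0.
have sX : size ('X * (cheb t.+1).2 : {poly algC}) = t.+2.
  by rewrite size_mul ?polyX_eq0 ?monic_neq0 // size_polyX s1.
have lt : (size (cheb t.+1).1 < size (('X * (cheb t.+1).2)%R : {poly algC}))%N.
  by rewrite sX ltnS (leq_trans s2).
split.
- rewrite [X in X \is monic]/= addrC monicE lead_coefDl //.
  by rewrite -monicE monicMl ?monicX.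
- by rewrite [LHS]/= addrC size_polyDl.
- by rewrite /= size_polyN s1.
Qed.

Definition inv_arc {V : finType} {e : rel V} (esym : symmetric e) (a : Defs.arc e) : Defs.arc e :=
  exist _ (arc_inv_pair (val a)) (etrans (esym _ _) (valP a)).

Lemma shift2 {V : finType} {e : rel V} (esym : symmetric e) : shift e *m shift e = 1%:M.
Proof.
apply/matrixP => i j; rewrite !mxE.
rewrite (bigD1 (enum_rank (inv_arc esym (enum_val j)))) //= !mxE enum_rankK /=.
rewrite eqxx mulr1 big1 ?addr0.
  rewrite /arc_inv_pair /= -surjective_pairing.
  by rewrite (inj_eq val_inj) (inj_eq enum_val_inj).
move=> k hk; rewrite !mxE.
case: (val (enum_val k) =P arc_inv_pair (val (enum_val j))) => [h|]; last by rewrite mulr0.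
exfalso; move/negP: hk; apply; apply/eqP.
by rewrite -[k]enum_valK; congr enum_rank; apply: val_inj.
Qed.

Lemma count_arcs {V : finType} {e : rel V} (esym : symmetric e) v :
  \sum_(k < #|Defs.arc e|) ((v == term_arc (enum_val k))%:R : algC) = (deg e v)%:R.
Proof.
rewrite -(big_enum_val (A := xpredT) (fun a : Defs.arc e => ((v == term_arc a)%:R : algC))) /=.
have -> : \sum_(a : Defs.arc e) ((v == term_arc a)%:R : algC) =
          \sum_(p : V * V | e p.1 p.2) ((v == p.2)%:R : algC).
  rewrite (reindex_omap (val : Defs.arc e -> V * V) insub); last first.
    by move=> p hp; rewrite insubT.
  by apply: eq_bigl => -[p hp] /=; rewrite hp insubT /= eqxx.
rewrite big_mkcond /= -(pair_bigA _ (fun w z => if e w z then ((v == z)%:R : algC) else 0)) /=.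
rewrite (eq_bigr (fun w => ((e v w)%:R : algC))); last first.
  move=> w _; rewrite (bigD1 v) //= eqxx big1 ?addr0; last first.
    by move=> z hz; rewrite eq_sym (negbTE hz); case: (e w z).
  by rewrite (esym w v); case: (e v w).
rewrite -natr_sum /deg; congr (_%:R).
rewrite cardsE -sum1_card.
rewrite [RHS]big_mkcond /=; apply: eq_bigr => w _.
by rewrite -topredE /=; case: (e v w).
Qed.

Definition cc {V : finType} (e : rel V) (v : V) : algC := (sqrtC (deg e v)%:R)^-1.

Lemma conj_cc {V : finType} (e : rel V) v : (cc e v)^* = cc e v.
Proof. by apply: geC0_conj; rewrite invr_ge0 sqrtC_ge0 ler0n. Qed.

Lemma bdryE {V : finType} (e : rel V) z k : bdry e z k =
  if enum_val z == term_arc (enum_val k) then cc e (enum_val z) else 0.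
Proof. by rewrite mxE. Qed.

Lemma adjmxE m n (A : 'M[algC]_(m, n)) i j : adjmx A i j = (A j i)^*.
Proof. by rewrite /adjmx !mxE. Qed.

Lemma dds {V : finType} {e : rel V} (esym : symmetric e) : bdry e *m adjmx (bdry e) =
  diag_mx (\row_z (cc e (enum_val z) * cc e (enum_val z) * (deg e (enum_val z))%:R)).
Proof.
apply/matrixP => z x; rewrite !mxE.
have [<-|nzx] := eqVneq z x.
  rewrite mulr1n -(count_arcs esym) mulr_sumr; apply: eq_bigr => k _.
  rewrite /adjmx !mxE; case: eqP => _; last by rewrite mul0r mulr0.
  by rewrite conj_cc mulr1.
rewrite mulr0n big1 // => k _; rewrite /adjmx !mxE.
case: eqP => [h1|]; last by rewrite mul0r.
case: eqP => [h2|]; last by rewrite conjC0 mulr0.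
by move/eqP: nzx; case; apply: enum_val_inj; rewrite h1 h2.
Qed.

Lemma ddd {V : finType} {e : rel V} (esym : symmetric e) : adjmx (bdry e) *m bdry e *m adjmx (bdry e) = adjmx (bdry e).
Proof.
rewrite -mulmxA (dds esym) mul_mx_diag; apply/matrixP => k x; rewrite !mxE.
case: eqP => _; last by rewrite conjC0 mul0r.
rewrite conj_cc /cc.
have [->|nz] := eqVneq (deg e (enum_val x)) 0%N.
  by rewrite sqrtC0 invr0 !mul0r.
have ns : sqrtC (deg e (enum_val x))%:R != 0 :> algC.
  by rewrite sqrtC_eq0 pnatr_eq0.
set N := (deg e (enum_val x))%:R; set s := sqrtC N.
have hN : N = s ^+ 2 by rewrite /s sqrtCK.
rewrite [X in _ * (_ * X)]hN.
by field.
Qed.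

Theorem lemma9p1 (V : finType) (e : rel V) (x y : V) (tau : nat) :
  simple_graph e ->
  pst (evol e) (adjmx (bdry e) *m evec x) (adjmx (bdry e) *m evec y) tau ->
  forall (s : seq algC) (E : algC -> 'M[algC]_(#|V|)),
    spectral_decomp (discr e) s E ->
    forall lam, lam \in eig_support s E (evec x) -> 2%:R * lam \in Aint.
Proof.
move=> [esym _] [_ [tpos [g [_ hpst]]]] s E [us hE horth hsum hP] lam.
rewrite mem_filter => /andP [hEx lams].
set d := bdry e in hpst *; set ds := adjmx d in hpst *; set R := shift e.
set U := evol e in hpst *; set EL := E lam in hEx *.
have hRR : R *m R = 1%:M by exact: shift2.
have hddd : ds *m d *m ds = ds by exact: ddd.
have hPd : discr e = d *m R *m ds by [].
have hEP : EL *m discr e = lam *: EL.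
  have [_ hEE _] := hE lam lams.
  rewrite hP mulmx_sumr (bigD1_seq lam) //= big1_seq ?addr0.
    by rewrite -scalemxAr hEE.
  move=> mu /andP [hmu mus]; rewrite -scalemxAr horth ?scaler0 //.
  by rewrite eq_sym.
have hUd : U *m ds = R *m ds.
  rewrite /U /evol -mulmxA mulmxBl mul1mx -scalemxAl hddd.
  by rewrite scaler_nat mulr2n addrK.
have hURd : U *m (R *m ds) = 2%:R *: (R *m ds *m discr e) - ds.
  rewrite /U /evol -mulmxA mulmxBl mul1mx -scalemxAl mulmxBr -scalemxAr.
  by rewrite !mulmxA hRR mul1mx.
have key : forall t, exists A B : 'M[algC]_#|V|,
  [/\ U ^+ t *m ds = ds *m A + R *m ds *m B,
      EL *m A = (cheb t).1.[2%:R * lam] *: EL &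
      EL *m B = (cheb t).2.[2%:R * lam] *: EL].
  elim=> [|t [A [B [hU hA hB]]]].
    exists 1%:M, 0; split.
    - by rewrite expr0 mul1mx mulmx1 mulmx0 addr0.
    - by rewrite mulmx1 /= hornerC scale1r.
    - by rewrite mulmx0 /= hornerC scale0r.
  exists (- B), (A + 2%:R *: (discr e *m B)); split.
  - rewrite exprS -[U * _]/(U *m U ^+ t) -mulmxA hU mulmxDr !mulmxA hUd -(mulmxA U) hURd mulmxBl mulmxDr.
    rewrite mulmxN -scalemxAl -scalemxAr !mulmxA.
    by rewrite addrA [RHS]addrC.
  - by rewrite mulmxN hB /= hornerN scaleNr.
  - rewrite mulmxDr hA -scalemxAr mulmxA hEP -scalemxAl hB /=.
    rewrite hornerD hornerM hornerX [RHS]scalerDl; congr (_ + _); by rewrite !scalerA.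
have [A [B [hU hA hB]]] := key tau.
set a := (cheb tau).1.[2%:R * lam] in hA; set b := (cheb tau).2.[2%:R * lam] in hB.
set ex := evec x in hpst hEx *; set ey := evec y in hpst *.
have hddd' : ds *m (d *m ds) = ds by rewrite mulmxA.
have hEDM : forall n (M : 'M[algC]_(#|V|, n)),
    lam *: (EL *m d *m ds *m M) = lam *: (EL *m M).
  move=> n M; rewrite !scalemxAl -hEP hPd -!mulmxA.
  by rewrite (mulmxA d ds M) (mulmxA ds (d *m ds) M) hddd'.
have hEPM : forall n (M : 'M[algC]_(#|V|, n)),
    EL *m d *m R *m ds *m M = lam *: (EL *m M).
  by move=> n M; rewrite scalemxAl -hEP hPd !mulmxA.
have e1 : EL *m d *m ds *m A *m ex + EL *m d *m R *m ds *m B *m ex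
          = g *: (EL *m d *m ds *m ey).
  have := congr1 (mulmx (EL *m d)) hpst.
  rewrite (mulmxA (U ^+ tau) ds ex) hU mulmxDl mulmxDr -scalemxAr !mulmxA.
  done.
have e2 : EL *m d *m R *m ds *m A *m ex + EL *m d *m ds *m B *m ex
          = g *: (EL *m d *m R *m ds *m ey).
  have -> : EL *m d *m ds *m B *m ex = EL *m d *m R *m (R *m ds) *m B *m ex.
    by rewrite !mulmxA -(mulmxA _ R R) hRR mulmx1.
  have := congr1 (mulmx (EL *m d *m R)) hpst.
  rewrite (mulmxA (U ^+ tau) ds ex) hU mulmxDl mulmxDr -scalemxAr !mulmxA.
  done.
have t1 : lam *: (EL *m d *m ds *m A *m ex) = (lam * a) *: (EL *m ex).
  by rewrite -mulmxA hEDM mulmxA hA -scalemxAl scalerA.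
have t2 : EL *m d *m R *m ds *m B *m ex = (lam * b) *: (EL *m ex).
  by rewrite -mulmxA hEPM mulmxA hB -scalemxAl scalerA.
have t3 : EL *m d *m R *m ds *m A *m ex = (lam * a) *: (EL *m ex).
  by rewrite -mulmxA hEPM mulmxA hA -scalemxAl scalerA.
have t4 : lam *: (EL *m d *m ds *m B *m ex) = (lam * b) *: (EL *m ex).
  by rewrite -mulmxA hEDM mulmxA hB -scalemxAl scalerA.
have t5 : lam *: (EL *m d *m ds *m ey) = lam *: (EL *m ey) := hEDM _ ey.
have t6 : EL *m d *m R *m ds *m ey = lam *: (EL *m ey) := hEPM _ ey.
have h1 : (lam * a + lam * (lam * b)) *: (EL *m ex) = (g * lam) *: (EL *m ey).
  have H := congr1 (fun M => lam *: M) e1; simpl in H.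
  rewrite scalerDr t1 t2 (scalerA lam (lam * b)) (scalerA lam g) (mulrC lam g) in H.
  rewrite -(scalerA g lam) t5 (scalerA g lam) in H.
  by rewrite scalerDl.
have h2 : (lam * (lam * a) + lam * b) *: (EL *m ex) = (lam * (g * lam)) *: (EL *m ey).
  have H := congr1 (fun M => lam *: M) e2; simpl in H.
  rewrite scalerDr t3 t4 t6 (scalerA lam (lam * a)) (scalerA g lam) (scalerA lam (g * lam)) in H.
  by rewrite scalerDl.
have h3 : (lam * (lam * a + lam * (lam * b)) - (lam * (lam * a) + lam * b)) *: (EL *m ex) = 0.
  by rewrite scalerBl -scalerA h1 h2 scalerA subrr.
have h4 : lam * b * ((lam - 1) * (lam + 1)) = 0.
  move/eqP: h3; rewrite scaler_eq0 (negbTE hEx) orbF => /eqP h3.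
  rewrite -h3; ring.
have [m hm] : exists m, tau = m.+1 by case: (tau) tpos => // m _; exists m.
move/eqP: h4; rewrite !mulf_eq0 => /orP [/orP [/eqP -> | hb0] | /orP [hl | hl]].
- by rewrite mulr0 Aint0.
- have [mon _ _] := cheb_monic m; have [_ hint] := cheb_int m.+1.
  rewrite -hm in mon hint.
  by apply: (root_monic_Aint _ mon hint); rewrite /root.
- rewrite subr_eq0 in hl; rewrite (eqP hl) mulr1; exact: Aint_Cnat (natr_nat _ _).
- rewrite addr_eq0 in hl; rewrite (eqP hl) mulrN1 rpredN; exact: Aint_Cnat (natr_nat _ _).
Qed.
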